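(* Let $\hat\rho$ be a two-mode Gaussian state with zero first moments and covariance matrix in the standard form $\gamma=\begin{pmatrix}\lambda_a I_2 & C\\ C^T&\lambda_b I_2\end{pmatrix}$, $C=\mathrm{diag}(c_x,-c_p)$, with $c_x\ge|c_p|$ and $\lambda_a\lambda_b>c_x^2$. Then $$Q(\hat\rho)=\frac{2}{\pi}\arctan\!\Big(\frac{c_x}{\sqrt{\lambda_a\lambda_b-c_x^2}}\Big),$$ the supremum being attained at $\theta=\varphi=0$. In particular, for a two-mode squeezed vacuum ($\lambda_a=\lambda_b=\cosh 2r$, $c_x=c_p=\sinh 2r$, $r\ge 0$), $Q=\frac{2}{\pi}\arctan(\sinh 2r)$.
   Context: Covariance matrix convention: $\gamma_{ij}=\mathrm{tr}[\hat\rho\{\hat R_i-d_i,\hat R_j-d_j\}]$ with $\hat R=(\hat x_A,\hat p_A,\hat x_B,\hat p_B)$, $[\hat x_j,\hat p_j]=i$, so the vacuum has $\gamma=I$. For angles $\theta,\varphi$ let $\hat x_A^\theta=\cos\theta\,\hat x_A+\sin\theta\,\hat p_A$, $\hat x_B^\varphi=\cos\varphi\,\hat x_B+\sin\varphi\,\hat p_B$, and $f^{\hat\rho}_{\theta,\varphi}(u,v)$ the joint density of their outcomes. For $u,v\ge0$, $S(u,v)=f(u,v)+f(-u,-v)+f(u,-v)+f(-u,v)$, $D(u,v)=f(u,v)+f(-u,-v)-f(u,-v)-f(-u,v)$, $\mathcal B_{\theta,\varphi}=|D|/S$ (0 where $S=0$), and $Q(\hat\rho)=\sup_{\theta,\varphi}\int\!\!\int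 f^{\hat\rho}_{\theta,\varphi}(u,v)\mathcal B_{\theta,\varphi}(|u|,|v|)\,du\,dv$. *)

(* Defs.v *)
From Stdlib Require Import Reals Lra.
Open Scope R_scope.

(* A real 4x4 matrix, indexed by 0..3 in the order (x_A, p_A, x_B, p_B). *)
Definition mat4 := nat -> nat -> R.

(* Standard-form covariance matrix
   [[la I, C],[C^T, lb I]] with C = diag(cx, -cp). *)
Definition gamma_std (la lb cx cp : R) : mat4 := fun i j =>
  match i, j with
  | 0%nat, 0%nat => la | 1%nat, 1%nat => la
  | 2%nat, 2%nat => lb | 3%nat, 3%nat => lb
  | 0%nat, 2%nat => cx | 2%nat, 0%nat => cx
  | 1%nat, 3%nat => - cp | 3%nat, 1%nat => - cp
  | _, _ => 0
  end.

(* Coefficient vectors of the quadratures x_A^theta and x_B^phi in R. *)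
Definition vA (th : R) (i : nat) : R :=
  match i with 0%nat => cos th | 1%nat => sin th | _ => 0 end.
Definition vB (ph : R) (i : nat) : R :=
  match i with 2%nat => cos ph | 3%nat => sin ph | _ => 0 end.

Definition bil (g : mat4) (w w' : nat -> R) : R :=
  sum_f_R0 (fun i => sum_f_R0 (fun j => w i * g i j * w' j) 3) 3.

(* Since gamma_ij = <{R_i - d_i, R_j - d_j}> = 2 Cov, the classical covariance
   matrix of the quadrature outcomes (x_A^theta, x_B^phi) is (1/2) L gamma L^T. *)
Definition s11 (g : mat4) th := bil g (vA th) (vA th) / 2.
Definition s22 (g : mat4) ph := bil g (vB ph) (vB ph) / 2.
Definition s12 (g : mat4) th ph := bil g (vA th) (vB ph) / 2.

(* Joint density f_{theta,phi}(u,v) of the homodyne outcomes of a Gaussian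
   state with zero first moments and covariance matrix g: centred bivariate
   normal density with covariance [[s11, s12],[s12, s22]]. *)
Definition fdens (g : mat4) (th ph : R) (u v : R) : R :=
  let a := s11 g th in let b := s22 g ph in let c := s12 g th ph in
  let det := a * b - c * c in
  / (2 * PI * sqrt det) * exp (- (b * u * u - 2 * c * u * v + a * v * v) / (2 * det)).

Definition Sfun (f : R -> R -> R) (u v : R) : R :=
  f u v + f (- u) (- v) + f u (- v) + f (- u) v.
Definition Dfun (f : R -> R -> R) (u v : R) : R :=
  f u v + f (- u) (- v) - f u (- v) - f (- u) v.
Definition Bfun (f : R -> R -> R) (u v : R) : R :=
  if Req_EM_T (Sfun f u v) 0 then 0 else Rabs (Dfun f u v) / Sfun f u v.

Definition Qintegrand (g : mat4) (th ph : R) (u v : R) : R :=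
  fdens g th ph u v * Bfun (fdens g th ph) (Rabs u) (Rabs v).

Definition is_RInt (f : R -> R) (a b I : R) : Prop :=
  exists pr : Riemann_integrable f a b, RiemannInt pr = I.

Definition is_integral_R (f : R -> R) (I : R) : Prop :=
  forall eps, 0 < eps -> exists M, forall a b, a <= - M -> M <= b ->
    exists J, is_RInt f a b J /\ Rabs (J - I) < eps.

(* Integral over R^2 (as an iterated improper integral; the integrand used
   below is nonnegative and continuous, so this agrees with the Lebesgue
   double integral by Tonelli). *)
Definition is_integral_R2 (g : R -> R -> R) (I : R) : Prop :=
  exists h : R -> R,
    (forall u, is_integral_R (fun v => g u v) (h u)) /\ is_integral_R h I.

Definition is_Q (g : mat4) (q : R) : Prop :=
  is_lub (fun I => exists th ph, is_integral_R2 (Qintegrand g th ph) I) q.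

(* Main.v *)
Require Import Defs.
From Stdlib Require Import Reals Lra FunctionalExtensionality.
From Coquelicot Require Import Coquelicot.
Open Scope R_scope.

Lemma exd_cont (f : R -> R) x : ex_derive f x -> continuous f x.
Proof. apply (@ex_derive_continuous R_AbsRing R_NormedModule). Qed.

Lemma cont_ex_RInt (f : R -> R) a b : (forall x, continuous f x) -> ex_RInt f a b.
Proof. intros H. apply (@ex_RInt_continuous R_CompleteNormedModule). intros; apply H. Qed.

Lemma is_RInt_of (f : R -> R) a b : (forall x, continuous f x) -> Defs.is_RInt f a b (RInt f a b).
Proof.
  intros H. exists (ex_RInt_Reals_0 _ _ _ (cont_ex_RInt f a b H)).
  symmetry. apply RInt_Reals.
Qed.

Lemma Chasles3 (f : R -> R) a b c d : (forall x, continuous f x) ->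
  RInt f a d = RInt f a b + RInt f b c + RInt f c d.
Proof.
  intros H.
  rewrite <- (@RInt_Chasles R_CompleteNormedModule f a c d) by (apply cont_ex_RInt; auto).
  rewrite <- (@RInt_Chasles R_CompleteNormedModule f a b c) by (apply cont_ex_RInt; auto).
  reflexivity.
Qed.

Lemma abs_le_int (f : R -> R) a b : a <= b -> (forall x, continuous f x) ->
  Rabs (RInt f a b) <= RInt (fun x => Rabs (f x)) a b.
Proof. intros Hab H. apply abs_RInt_le; auto. apply cont_ex_RInt; auto. Qed.

Lemma impr (F : R -> R) (I : R) :
  (forall x, continuous F x) ->
  (forall eps, 0 < eps -> exists M, 0 <= M /\ Rabs (RInt F (-M) M - I) <= eps /\
      (forall Y, M <= Y -> RInt (fun x => Rabs (F x)) M Y <= eps /\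
                           RInt (fun x => Rabs (F x)) (-Y) (-M) <= eps)) ->
  is_integral_R F I.
Proof.
  intros Hc H eps Heps.
  destruct (H (eps/4)) as [M [HM [H1 H2]]]; [lra|].
  exists M. intros a b Ha Hb. exists (RInt F a b). split; [apply is_RInt_of; auto|].
  rewrite (Chasles3 F a (-M) M b Hc).
  destruct (H2 b Hb) as [Hb1 _].
  destruct (H2 (-a)) as [_ Ha1]; [lra|].
  rewrite Ropp_involutive in Ha1.
  pose proof (abs_le_int F M b Hb Hc).
  pose proof (abs_le_int F a (-M) Ha Hc).
  revert H0 H3 H1 Hb1 Ha1.
  generalize (RInt F a (-M)) (RInt F (-M) M) (RInt F M b).
  intros x y z. unfold Rabs. repeat destruct Rcase_abs; lra.
Qed.

Lemma exp_neg_le y : 0 < y -> exp (- y) <= / y.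
Proof.
  intros Hy. rewrite exp_Ropp. apply Rinv_le_contravar; auto.
  pose proof (exp_ineq1 y (Rgt_not_eq y 0 Hy)). lra.
Qed.

Definition gs (al x : R) := exp (- (al * (x * x))).

Lemma gs_pos al x : 0 < gs al x.
Proof. apply exp_pos. Qed.

Lemma gs_cont al x : continuous (gs al) x.
Proof. apply exd_cont. unfold gs. auto_derive. auto. Qed.

Lemma gs_le1 al x : 0 <= al -> gs al x <= 1.
Proof.
  intros. unfold gs. rewrite <- exp_0. destruct (Req_dec (al*(x*x)) 0) as [E|E].
  rewrite E, Ropp_0; lra.
  left. apply exp_increasing. assert (0 <= al*(x*x)) by (apply Rmult_le_pos; nra). lra.
Qed.

Lemma gauss_tail al q M Y : 0 < al -> Rabs q < M -> M <= Y ->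
  RInt (fun v => gs al (v - q)) M Y <= / (al * (M - Rabs q)).
Proof.
  intros Hal Hq HMY.
  assert (HMq : 0 < M - q) by (unfold Rabs in Hq; destruct Rcase_abs in Hq; lra).
  assert (Hc : forall x, continuous (fun v => gs al (v - q)) x).
  { intros x. apply exd_cont. unfold gs. auto_derive. auto. }
  apply Rle_trans with (RInt (fun v => / (al * ((v - q) * (v - q)))) M Y).
  { apply RInt_le; auto. apply cont_ex_RInt; auto.
    apply (@ex_RInt_continuous R_CompleteNormedModule). intros z Hz. apply exd_cont.
    rewrite Rmin_left in Hz by lra. rewrite Rmax_right in Hz by lra.
    auto_derive. assert (0 < z - q) by lra. apply Rgt_not_eq.
    apply Rmult_lt_0_compat; auto. apply Rmult_lt_0_compat; lra.
    intros x Hx. unfold gs. apply exp_neg_le.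
    assert (0 < x - q) by lra. apply Rmult_lt_0_compat; auto. apply Rmult_lt_0_compat; lra. }
  assert (E := @is_RInt_derive R_CompleteNormedModule (fun v => - / (al * (v - q)))
     (fun v => / (al * ((v - q) * (v - q)))) M Y).
  assert (E1 : forall x, Rmin M Y <= x <= Rmax M Y -> is_derive (fun v => - / (al * (v - q))) x (/ (al * ((x - q) * (x - q))))).
  { intros x Hx. rewrite Rmin_left in Hx by lra. rewrite Rmax_right in Hx by lra.
      assert (0 < x - q) by lra.
      auto_derive. apply Rgt_not_eq. apply Rmult_lt_0_compat; lra.
      field. split; lra. }
  assert (E2 : forall x, Rmin M Y <= x <= Rmax M Y -> continuous (fun v => / (al * ((v - q) * (v - q)))) x).
  { intros x Hx. rewrite Rmin_left in Hx by lra. rewrite Rmax_right in Hx by lra.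
      assert (0 < x - q) by lra. apply exd_cont.
      auto_derive. apply Rgt_not_eq. apply Rmult_lt_0_compat; auto. apply Rmult_lt_0_compat; lra. }
  specialize (E E1 E2).
  rewrite (is_RInt_unique _ _ _ _ E). unfold minus, plus, opp; simpl.
  assert (0 < Y - q) by lra.
  assert (0 < M - Rabs q) by lra.
  assert (M - Rabs q <= M - q) by (unfold Rabs; destruct Rcase_abs; lra).
  assert (0 < / (al * (Y - q))) by (apply Rinv_0_lt_compat; apply Rmult_lt_0_compat; lra).
  assert (/ (al * (M - q)) <= / (al * (M - Rabs q))).
  { apply Rinv_le_contravar. apply Rmult_lt_0_compat; lra. apply Rmult_le_compat_l; lra. }
  lra.
Qed.

Definition kf (A B s t : R) := t * exp (- ((A + B * (s * s)) * (t * t))).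
Definition dM (A B M s : R) := (1 - exp (- ((A + B * (s * s)) * (M * M)))) / (2 * (A + B * (s * s))).

Lemma kf_int A B M s : 0 < A -> 0 <= B -> RInt (kf A B s) 0 M = dM A B M s.
Proof.
  intros HA HB. assert (HP : 0 < A + B * (s * s)) by nra.
  assert (E := @is_RInt_derive R_CompleteNormedModule
     (fun t => - exp (- ((A + B * (s * s)) * (t * t))) / (2 * (A + B * (s * s))))
     (kf A B s) 0 M).
  assert (H1 : forall x : R, Rmin 0 M <= x <= Rmax 0 M -> is_derive
     (fun t : R => - exp (- ((A + B * (s * s)) * (t * t))) / (2 * (A + B * (s * s)))) x (kf A B s x)).
  { intros x _. unfold kf. auto_derive. lra. field. lra. }
  assert (H2 : forall x : R, Rmin 0 M <= x <= Rmax 0 M -> continuous (kf A B s) x).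
  { intros x _. apply exd_cont. unfold kf. auto_derive. auto. }
  rewrite (is_RInt_unique _ _ _ _ (E H1 H2)).
  unfold minus, plus, opp, dM; simpl. rewrite Rmult_0_r, Rmult_0_r, Ropp_0, exp_0. field. lra.
Qed.

Lemma cont2_exp (g : R -> R -> R) x y : continuity_2d_pt g x y ->
  continuity_2d_pt (fun u v => exp (g u v)) x y.
Proof.
  intros H. apply (continuity_1d_2d_pt_comp exp g). apply derivable_continuous_pt.
  apply derivable_pt_exp. auto.
Qed.

Lemma kf_cont2 A B x y : continuity_2d_pt (kf A B) x y.
Proof.
  unfold kf. apply continuity_2d_pt_mult. apply continuity_2d_pt_id2.
  apply cont2_exp. apply continuity_2d_pt_opp.
  apply continuity_2d_pt_mult; [apply continuity_2d_pt_plus|apply continuity_2d_pt_mult].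
  apply continuity_2d_pt_const. apply continuity_2d_pt_mult. apply continuity_2d_pt_const.
  apply continuity_2d_pt_mult; apply continuity_2d_pt_id1.
  apply continuity_2d_pt_id2. apply continuity_2d_pt_id2.
Qed.

Definition Fo (A B : R) (z t : R) := gs A t * RInt (gs B) 0 (z * t).

Lemma Fo_derive A B z t : is_derive (fun z => Fo A B z t) z (kf A B z t).
Proof.
  unfold Fo, kf, gs. auto_derive.
  - repeat split.
    + apply cont_ex_RInt. intros; apply gs_cont.
    + apply filter_forall. intros x. apply continuity_pt_filterlim. apply gs_cont.
  - replace (- ((A + B * (z * z)) * (t * t))) with (- (A * (t * t)) + - (B * (z * t * (z * t)))) by ring.
    rewrite exp_plus. ring.
Qed.

Lemma Fo_cont A B z t : continuous (Fo A B z) t.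
Proof.
  apply exd_cont. unfold Fo, gs. auto_derive. repeat split.
  - apply cont_ex_RInt. intros; apply gs_cont.
  - apply filter_forall. intros x. apply continuity_pt_filterlim. apply gs_cont.
Qed.

Lemma Fo_Derive A B z t : Derive (fun z => Fo A B z t) z = kf A B z t.
Proof. apply is_derive_unique. apply Fo_derive. Qed.

Lemma dM_cont A B M s : 0 < A -> 0 <= B -> continuous (dM A B M) s.
Proof.
  intros HA HB. apply exd_cont. unfold dM. auto_derive. nra.
Qed.

Lemma outer_core A B lam M : 0 < A -> 0 < B -> 0 <= M ->
  RInt (Fo A B lam) 0 M = RInt (dM A B M) 0 lam.
Proof.
  intros HA HB HM.
  assert (D : forall s, is_derive (fun z => RInt (Fo A B z) 0 M) s (dM A B M s)).
  { intros s.
    assert (P := is_derive_RInt_param (Fo A B) 0 M s).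
    rewrite (RInt_ext (fun t => Derive (fun u => Fo A B u t) s) (kf A B s)) in P
      by (intros; apply Fo_Derive).
    rewrite kf_int in P by lra.
    apply P.
    - apply filter_forall. intros x t _. eexists. apply Fo_derive.
    - intros t _. apply (continuity_2d_pt_ext (kf A B)).
      intros; symmetry; apply Fo_Derive. apply kf_cont2.
    - apply filter_forall. intros y. apply cont_ex_RInt. apply Fo_cont. }
  assert (E := @is_RInt_derive R_CompleteNormedModule (fun z => RInt (Fo A B z) 0 M) (dM A B M) 0 lam).
  rewrite (is_RInt_unique _ _ _ _ (E (fun x _ => D x) (fun x _ => dM_cont A B M x HA (Rlt_le _ _ HB)))).
  unfold minus, plus, opp; simpl.
  rewrite (RInt_ext (Fo A B 0) (fun _ => 0)).
  - rewrite RInt_const. unfold scal; simpl; unfold mult; simpl. assert (Hx : forall X : R, X = X + - ((M - 0) * 0)) by (intros; ring). apply Hx.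
  - intros x _. unfold Fo. rewrite Rmult_0_l, RInt_point. unfold zero; simpl. apply Rmult_0_r.
Qed.

Definition fd (a b c u v : R) := / (2 * PI * sqrt (a*b - c*c)) *
  exp (- (b * u * u - 2 * c * u * v + a * v * v) / (2 * (a*b - c*c))).
Definition Tq (t : R) := (exp t - exp (-t)) / (exp t + exp (-t)).
Definition Gc a b c u v := fd a b c u v * Tq (Rabs c * Rabs u * Rabs v / (a*b - c*c)).
Definition Kc a b c := / (2 * PI * sqrt (a*b - c*c)).

Lemma Kc_pos a b c : c * c < a * b -> 0 < Kc a b c.
Proof.
  intros H. unfold Kc. apply Rinv_0_lt_compat. apply Rmult_lt_0_compat.
  pose proof PI_RGT_0; lra. apply sqrt_lt_R0; lra.
Qed.

Lemma fd_fact a b c x y : c * c < a * b ->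
  fd a b c x y = Kc a b c * exp (- (b * x * x + a * y * y) / (2 * (a*b - c*c))) * exp (c * x * y / (a*b - c*c)).
Proof.
  intros H. unfold fd, Kc. rewrite (Rmult_assoc (/ _)), <- exp_plus. f_equal. f_equal. field. lra.
Qed.

Lemma fd_opp2 a b c x y : fd a b c (-x) (-y) = fd a b c x y.
Proof. unfold fd. replace (b * - x * - x - 2 * c * - x * - y + a * - y * - y) with (b*x*x - 2*c*x*y + a*y*y) by ring. reflexivity. Qed.
Lemma fd_opp1 a b c x y : fd a b c (-x) y = fd a b c x (-y).
Proof. unfold fd. replace (b * - x * - x - 2 * c * - x * y + a * y * y) with (b * x * x - 2 * c * x * - y + a * - y * - y) by ring. reflexivity. Qed.

Lemma Tq_abs t : Rabs (exp t - exp (-t)) / (exp t + exp (-t)) = Tq (Rabs t).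
Proof.
  unfold Tq, Rabs. destruct (Rcase_abs t); destruct (Rcase_abs (exp t - exp (-t))).
  - rewrite Ropp_involutive. unfold Rdiv. rewrite (Rplus_comm (exp (-t))). ring.
  - exfalso. assert (exp t < exp (-t)) by (apply exp_increasing; lra). lra.
  - exfalso. assert (exp (-t) <= exp t).
    { destruct (Req_dec t 0). subst. rewrite Ropp_0. lra. left. apply exp_increasing; lra. }
    lra.
  - reflexivity.
Qed.

Lemma Bfun_eq a b c U V : c * c < a * b ->
  Bfun (fd a b c) U V = Tq (Rabs (c * U * V / (a*b - c*c))).
Proof.
  intros H. set (t := c * U * V / (a*b - c*c)).
  set (E := exp (- (b * U * U + a * V * V) / (2 * (a*b - c*c)))).
  set (K := Kc a b c).
  assert (HK : 0 < K) by (apply Kc_pos; auto).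
  assert (HE : 0 < E) by apply exp_pos.
  assert (F1 : fd a b c U V = K * E * exp t) by (rewrite fd_fact; auto).
  assert (F2 : fd a b c U (-V) = K * E * exp (- t)).
  { rewrite fd_fact; auto. unfold E, t.
    replace (c*U*-V/(a*b-c*c)) with (- (c*U*V/(a*b-c*c))) by (field; lra).
    replace (b*U*U + a*-V*-V) with (b*U*U+a*V*V) by ring. reflexivity. }
  assert (HS : Sfun (fd a b c) U V = 2 * K * E * (exp t + exp (-t))).
  { unfold Sfun. rewrite fd_opp2, fd_opp1, F1, F2. ring. }
  assert (HD : Dfun (fd a b c) U V = 2 * K * E * (exp t - exp (-t))).
  { unfold Dfun. rewrite fd_opp2, fd_opp1, F1, F2. ring. }
  assert (P : 0 < exp t + exp (-t)) by (pose proof (exp_pos t); pose proof (exp_pos (-t)); lra).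
  unfold Bfun. destruct (Req_EM_T (Sfun (fd a b c) U V) 0) as [e|e].
  - exfalso. rewrite HS in e. assert (0 < 2 * K * E * (exp t + exp (-t))).
    { repeat apply Rmult_lt_0_compat; lra. } lra.
  - rewrite HS, HD, <- Tq_abs. rewrite Rabs_mult. rewrite (Rabs_right (2*K*E)).
    field. split; lra. assert (0 < 2 * K * E) by (repeat apply Rmult_lt_0_compat; lra). lra.
Qed.

Definition Gfun a b c u v := fd a b c u v * Bfun (fd a b c) (Rabs u) (Rabs v).

Lemma Gfun_Gc a b c u v : 0 < a -> 0 < b -> c * c < a * b -> Gfun a b c u v = Gc a b c u v.
Proof.
  intros Ha Hb H. unfold Gfun, Gc. rewrite Bfun_eq by auto. f_equal. f_equal.
  unfold Rdiv. rewrite !Rabs_mult, !Rabs_Rabsolu. f_equal.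
  rewrite Rabs_inv. rewrite Rabs_right by lra. reflexivity.
Qed.

Section RI.
Variable f : R -> R.
Hypothesis Hf : forall x, continuous f x.

Lemma RInt_opp_sub a b : RInt f (-b) (-a) = RInt (fun x => f (-x)) a b.
Proof.
  assert (E := @RInt_comp_lin R_CompleteNormedModule f (-1) 0 a b (cont_ex_RInt _ _ _ Hf)).
  replace (-1 * a + 0) with (-a) in E by ring. replace (-1 * b + 0) with (-b) in E by ring.
  rewrite <- (opp_RInt_swap f (-a) (-b)) by (apply cont_ex_RInt; auto).
  rewrite <- E. unfold scal; simpl; unfold mult; simpl.
  rewrite (RInt_ext _ (fun y => opp (f (-y)))).
  rewrite (@RInt_opp R_CompleteNormedModule). unfold opp; simpl. ring.
  apply cont_ex_RInt. intros x. apply (continuous_comp (fun y => -y) f). 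
  apply exd_cont. auto_derive. auto. auto.
  intros x _. unfold opp; simpl. replace (-1 * x + 0) with (-x) by ring. ring.
Qed.

Lemma cont_opp_f x : continuous (fun y => f (-y)) x.
Proof. apply (continuous_comp (fun y => -y) f). apply exd_cont. auto_derive. auto. auto. Qed.

Lemma RInt_plusR (g : R -> R) a b : (forall x, continuous g x) ->
  RInt (fun x => f x + g x) a b = RInt f a b + RInt g a b.
Proof.
  intros Hg. apply (@RInt_plus R_CompleteNormedModule); apply cont_ex_RInt; auto.
Qed.

Lemma RInt_sym M : RInt f (-M) M = RInt (fun x => f x + f (-x)) 0 M.
Proof.
  rewrite <- (@RInt_Chasles R_CompleteNormedModule f (-M) 0 M) by (apply cont_ex_RInt; auto).
  rewrite RInt_plusR by apply cont_opp_f.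
  replace 0 with (-0) at 1 by ring. rewrite RInt_opp_sub.
  unfold plus; simpl. ring.
Qed.

Lemma RInt_shift s a b : RInt (fun x => f (x + s)) a b = RInt f (a + s) (b + s).
Proof.
  assert (E := @RInt_comp_lin R_CompleteNormedModule f 1 s a b (cont_ex_RInt _ _ _ Hf)).
  replace (1 * a + s) with (a + s) in E by ring. replace (1 * b + s) with (b + s) in E by ring.
  rewrite <- E. apply RInt_ext. intros x _. unfold scal; simpl; unfold mult; simpl.
  rewrite Rmult_1_l. f_equal. ring.
Qed.

Lemma RInt_scalR k a b : RInt (fun x => k * f x) a b = k * RInt f a b.
Proof. apply (@RInt_scal R_CompleteNormedModule). apply cont_ex_RInt; auto. Qed.

Lemma RInt_minusR (g : R -> R) a b : (forall x, continuous g x) ->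
  RInt (fun x => f x - g x) a b = RInt f a b - RInt g a b.
Proof.
  intros Hg. apply (@RInt_minus R_CompleteNormedModule); apply cont_ex_RInt; auto.
Qed.

Lemma RInt_leR (g : R -> R) a b : a <= b -> (forall x, continuous g x) ->
  (forall x, a < x < b -> f x <= g x) -> RInt f a b <= RInt g a b.
Proof. intros Hab Hg H. apply RInt_le; auto; apply cont_ex_RInt; auto. Qed.

Lemma cont_abs x : continuous (fun y => Rabs (f y)) x.
Proof. apply continuous_Rabs_comp. auto. Qed.

End RI.

Lemma RInt_constR (k a b : R) : RInt (fun _ => k) a b = (b - a) * k.
Proof. rewrite RInt_const. reflexivity. Qed.

Lemma cont_const (k x : R) : continuous (fun _ : R => k) x.
Proof. apply (@continuous_const R_UniformSpace R_UniformSpace). Qed.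

Lemma expo_id a b c u v C U : 0 < a -> c * c < a * b -> C * C = c * c -> U * U = u * u ->
  - (b * u * u + a * v * v) / (2 * (a * b - c * c)) + C * U * v / (a * b - c * c)
  = - (/ (2 * a) * (u * u)) + - (a / (2 * (a * b - c * c)) * ((v - C * U / a) * (v - C * U / a))).
Proof.
  intros Ha H HC HU.
  replace (b * u * u) with (b * (U * U)) by (rewrite HU; ring).
  rewrite <- HU. rewrite <- HC. rewrite <- HC in H. field. split; lra.
Qed.

Lemma fd_gauss a b c u v : 0 < a -> c * c < a * b ->
  fd a b c u v = Kc a b c * gs (/ (2 * a)) u * gs (a / (2 * (a * b - c * c))) (v - c * u / a).
Proof.
  intros Ha H. unfold fd, Kc, gs. rewrite (Rmult_assoc (/ _)), <- exp_plus. f_equal. f_equal.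
  field. split; lra.
Qed.

Lemma Tq_bounds t : 0 <= t -> 0 <= Tq t <= 1.
Proof.
  intros Ht. unfold Tq.
  assert (exp (-t) <= exp t).
  { destruct Ht as [Ht|Ht]. left; apply exp_increasing; lra. subst; rewrite Ropp_0; lra. }
  pose proof (exp_pos t); pose proof (exp_pos (-t)).
  assert (P : 0 < exp t + exp (-t)) by lra.
  split. unfold Rdiv; apply Rmult_le_pos; [lra | left; apply Rinv_0_lt_compat; lra].
  apply (Rmult_le_reg_r (exp t + exp (-t))); [lra|]. unfold Rdiv.
  rewrite Rmult_assoc, Rinv_l by lra. lra.
Qed.

Lemma cosh_abs s : exp s + exp (-s) = exp (Rabs s) + exp (- Rabs s).
Proof.
  unfold Rabs. destruct Rcase_abs. rewrite Ropp_involutive. ring. reflexivity.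
Qed.

Lemma Gc_nonneg_bound a b c u v : 0 < a -> c * c < a * b ->
  0 <= Gc a b c u v <= Kc a b c * gs (a / (2 * (a * b - c * c))) (v - c * u / a).
Proof.
  intros Ha H. unfold Gc. rewrite fd_gauss by auto.
  assert (HK := Kc_pos a b c H).
  assert (T := Tq_bounds (Rabs c * Rabs u * Rabs v / (a * b - c * c))).
  destruct T as [T1 T2].
  { unfold Rdiv. apply Rmult_le_pos. repeat apply Rmult_le_pos; apply Rabs_pos.
    left; apply Rinv_0_lt_compat; lra. }
  assert (G1 : gs (/ (2 * a)) u <= 1) by (apply gs_le1; left; apply Rinv_0_lt_compat; lra).
  assert (G2 := gs_pos (/ (2*a)) u).
  assert (G3 := gs_pos (a / (2 * (a * b - c * c))) (v - c * u / a)).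
  set (X := Kc a b c * gs (a / (2 * (a * b - c * c))) (v - c * u / a)).
  assert (HX : 0 < X) by (apply Rmult_lt_0_compat; auto).
  set (T := Tq (Rabs c * Rabs u * Rabs v / (a * b - c * c))) in *.
  replace (Kc a b c * gs (/ (2 * a)) u * gs (a / (2 * (a * b - c * c))) (v - c * u / a) * T)
    with (X * (gs (/ (2 * a)) u * T)) by (unfold X; ring).
  assert (0 <= gs (/ (2 * a)) u * T <= 1) by (split; nra).
  split; nra.
Qed.

Lemma Gc_sym a b c u v : 0 < a -> c * c < a * b -> 0 <= v ->
  Gc a b c u v + Gc a b c u (-v) = Kc a b c * gs (/ (2 * a)) u *
   (gs (a / (2 * (a * b - c * c))) (v - Rabs c * Rabs u / a)
    - gs (a / (2 * (a * b - c * c))) (v + Rabs c * Rabs u / a)).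
Proof.
  intros Ha H Hv. unfold Gc. rewrite Rabs_Ropp.
  rewrite !fd_fact by auto.
  set (d := a * b - c * c). set (K := Kc a b c).
  set (E := exp (- (b * u * u + a * v * v) / (2 * d))).
  replace (- (b * u * u + a * - v * - v) / (2 * d)) with (- (b * u * u + a * v * v) / (2 * d)) by (f_equal; ring).
  fold E.
  set (s := c * u * v / d).
  replace (c * u * - v / d) with (- s) by (unfold s; field; unfold d; lra).
  assert (Hs : Rabs c * Rabs u * Rabs v / d = Rabs s).
  { unfold s, Rdiv. rewrite !Rabs_mult, Rabs_inv, (Rabs_right d) by (unfold d; lra). reflexivity. }
  rewrite Hs.
  replace (K * E * exp s * Tq (Rabs s) + K * E * exp (- s) * Tq (Rabs s))
    with (K * E * ((exp s + exp (-s)) * Tq (Rabs s))) by ring.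
  rewrite cosh_abs. unfold Tq.
  replace ((exp (Rabs s) + exp (- Rabs s)) * ((exp (Rabs s) - exp (- Rabs s)) / (exp (Rabs s) + exp (- Rabs s))))
    with (exp (Rabs s) - exp (- Rabs s)).
  2:{ field. pose proof (exp_pos (Rabs s)); pose proof (exp_pos (- Rabs s)); lra. }
  rewrite <- Hs. rewrite (Rabs_right v) by lra.
  set (t := Rabs c * Rabs u * v / d).
  assert (HC : Rabs c * Rabs c = c * c) by (rewrite <- Rabs_mult; apply Rabs_right; nra).
  assert (HU : Rabs u * Rabs u = u * u) by (rewrite <- Rabs_mult; apply Rabs_right; nra).
  assert (E1 : E * exp t = gs (/ (2 * a)) u * gs (a / (2 * d)) (v - Rabs c * Rabs u / a)).
  { unfold E, gs, t. rewrite <- !exp_plus. f_equal. unfold d. apply expo_id; auto. }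
  assert (E2 : E * exp (- t) = gs (/ (2 * a)) u * gs (a / (2 * d)) (v + Rabs c * Rabs u / a)).
  { unfold E, gs, t. rewrite <- !exp_plus. f_equal.
    replace (- (Rabs c * Rabs u * v / d)) with ((- Rabs c) * Rabs u * v / d) by (field; unfold d; lra).
    replace (v + Rabs c * Rabs u / a) with (v - (- Rabs c) * Rabs u / a) by (field; lra).
    unfold d. apply expo_id; auto. rewrite <- HC. ring. }
  replace (K * E * (exp t - exp (- t))) with (K * (E * exp t) - K * (E * exp (- t))) by ring.
  rewrite E1, E2. fold d. ring.
Qed.

Lemma Tq_derive t : ex_derive Tq t.
Proof.
  unfold Tq. auto_derive. pose proof (exp_pos t); pose proof (exp_pos (-t)); lra.
Qed.

Lemma cont_multR (f g : R -> R) x : continuous f x -> continuous g x -> continuous (fun y => f y * g y) x.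
Proof. intros. apply (@continuous_mult R_UniformSpace R_AbsRing f g x); auto. Qed.

Lemma cont_compR (f g : R -> R) x : continuous f x -> continuous g (f x) -> continuous (fun y => g (f y)) x.
Proof. intros. apply (@continuous_comp R_UniformSpace R_UniformSpace R_UniformSpace f g x); auto. Qed.

Lemma Gc_cont a b c u v : c * c < a * b -> continuous (Gc a b c u) v.
Proof.
  intros H. unfold Gc.
  apply (cont_multR (fun v => fd a b c u v) (fun v => Tq (Rabs c * Rabs u * Rabs v / (a * b - c * c)))).
  - apply exd_cont. unfold fd. auto_derive. auto.
  - apply (cont_compR Rabs (fun w => Tq (Rabs c * Rabs u * w / (a * b - c * c)))).
    apply continuous_Rabs. apply exd_cont.
    apply (ex_derive_comp Tq (fun w => Rabs c * Rabs u * w / (a * b - c * c))).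
    apply Tq_derive. auto_derive. lra.
Qed.

Definition hh a b c u := Kc a b c * gs (/ (2 * a)) u *
  RInt (gs (a / (2 * (a * b - c * c)))) (- (Rabs c * Rabs u / a)) (Rabs c * Rabs u / a).

Lemma gs_shift_cont al q x : continuous (fun v => gs al (v - q)) x.
Proof. apply exd_cont. unfold gs. auto_derive. auto. Qed.

Lemma RInt_gs_nonneg al a b : a <= b -> 0 <= RInt (gs al) a b.
Proof.
  intros H. rewrite <- (Rmult_0_r (b - a)). rewrite <- RInt_constR.
  apply (RInt_leR (fun _ => 0) (cont_const 0) (gs al) a b H (gs_cont al)). intros; left; apply gs_pos.
Qed.

Lemma gauss_tail0 al M Y : 0 < al -> 0 < M -> M <= Y -> RInt (gs al) M Y <= / (al * M).
Proof.
  intros. rewrite (RInt_ext _ (fun v => gs al (v - 0))) by (intros; f_equal; ring).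
  replace M with (M - Rabs 0) at 2 by (rewrite Rabs_R0; ring).
  apply gauss_tail; auto. rewrite Rabs_R0; lra.
Qed.

Lemma inner a b c u : 0 < a -> c * c < a * b -> is_integral_R (Gc a b c u) (hh a b c u).
Proof.
  intros Ha H. apply impr. intros; apply Gc_cont; auto.
  intros eps Heps.
  set (al := a / (2 * (a * b - c * c))).
  set (p := Rabs c * Rabs u / a).
  set (K := Kc a b c).
  set (C0 := K * gs (/ (2 * a)) u).
  assert (Hal : 0 < al) by (unfold al; apply Rdiv_lt_0_compat; lra).
  assert (Hp : 0 <= p) by (unfold p; apply Rmult_le_pos; [apply Rmult_le_pos; apply Rabs_pos| left; apply Rinv_0_lt_compat; lra]).
  assert (HK : 0 < K) by (apply Kc_pos; auto).
  assert (HC0 : 0 < C0 <= K).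
  { unfold C0. pose proof (gs_pos (/(2*a)) u). assert (gs (/(2*a)) u <= 1) by (apply gs_le1; left; apply Rinv_0_lt_compat; lra). split; nra. }
  set (M := p + K / (al * eps) + 1).
  assert (HKa : 0 <= K / (al * eps)) by (left; apply Rdiv_lt_0_compat; [lra| apply Rmult_lt_0_compat; lra]).
  assert (HMp : 0 < M - p) by (unfold M; lra).
  assert (Hbound : K * / (al * (M - p)) <= eps).
  { assert (0 < al * (M - p)) by (apply Rmult_lt_0_compat; lra).
    apply (Rmult_le_reg_r (al * (M - p))); auto. rewrite Rmult_assoc, Rinv_l by lra.
    unfold M. replace (p + K / (al * eps) + 1 - p) with (K / (al * eps) + 1) by ring.
    replace (eps * (al * (K / (al * eps) + 1))) with (K + eps * al) by (field; lra).
    nra. }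
  assert (Hq : Rabs (c * u / a) = p).
  { unfold p, Rdiv. rewrite !Rabs_mult, Rabs_inv, (Rabs_right a) by lra. reflexivity. }
  exists M. split; [lra|]. split.
  -
    rewrite RInt_sym by (intros; apply Gc_cont; auto).
    rewrite (RInt_ext _ (fun v => C0 * (gs al (v + - p) - gs al (v + p)))).
    2:{ intros x Hx. rewrite Rmin_left in Hx by lra. rewrite Rmax_right in Hx by lra.
        rewrite Gc_sym by lra. unfold C0, K, al, p. repeat f_equal; ring. }
    rewrite RInt_scalR.
    2:{ intros x. apply (continuous_minus (fun v => gs al (v + - p)) (fun v => gs al (v + p))).
        apply exd_cont; unfold gs; auto_derive; auto. apply exd_cont; unfold gs; auto_derive; auto. }
    rewrite RInt_minusR.
    2:{ intros x. apply exd_cont; unfold gs; auto_derive; auto. }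
    2:{ intros x. apply exd_cont; unfold gs; auto_derive; auto. }
    rewrite (RInt_shift (gs al)) by apply gs_cont.
    rewrite (RInt_shift (gs al)) by apply gs_cont.
    replace (0 + - p) with (- p) by ring. replace (M + - p) with (M - p) by ring.
    replace (0 + p) with p by ring.
    assert (HC := fun x y z => @RInt_Chasles R_CompleteNormedModule (gs al) x y z (cont_ex_RInt _ _ _ (gs_cont al)) (cont_ex_RInt _ _ _ (gs_cont al))).
    rewrite <- (HC (-p) p (M - p)), <- (HC p (M - p) (M + p)).
    unfold plus; simpl.
    assert (Ehh : hh a b c u = C0 * RInt (gs al) (- p) p) by reflexivity.
    rewrite Ehh.
    assert (T1 := RInt_gs_nonneg al (M - p) (M + p) ltac:(lra)).
    assert (T2 := gauss_tail0 al (M - p) (M + p) Hal HMp ltac:(lra)).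
    replace (C0 * (RInt (gs al) (- p) p + RInt (gs al) p (M - p) -
      (RInt (gs al) p (M - p) + RInt (gs al) (M - p) (M + p))) - C0 * RInt (gs al) (- p) p)
      with (- (C0 * RInt (gs al) (M - p) (M + p))) by ring.
    rewrite Rabs_Ropp, Rabs_right by nra.
    apply Rle_trans with (K * / (al * (M - p))); auto.
    apply Rle_trans with (K * RInt (gs al) (M - p) (M + p)). nra.
    apply Rmult_le_compat_l; lra.
  - intros Y HY. split.
    + apply Rle_trans with (RInt (fun x => K * gs al (x - c * u / a)) M Y).
      { apply RInt_leR; auto. intros; apply (cont_abs (Gc a b c u) (fun z => Gc_cont a b c u z H)).
        intros; apply cont_multR. apply cont_const. apply gs_shift_cont.
        intros x _. destruct (Gc_nonneg_bound a b c u x Ha H). rewrite Rabs_right by lra. auto. }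
      rewrite RInt_scalR by apply gs_shift_cont.
      apply Rle_trans with (K * / (al * (M - p))); auto.
      apply Rmult_le_compat_l; [lra|]. rewrite <- Hq. apply gauss_tail; auto. rewrite Hq; lra.
    + rewrite RInt_opp_sub by (intros; apply cont_abs; intros; apply Gc_cont; auto).
      apply Rle_trans with (RInt (fun x => K * gs al (x - - (c * u / a))) M Y).
      { apply RInt_leR; auto. intros; apply (cont_abs (fun y => Gc a b c u (-y)) (cont_opp_f _ (fun z => Gc_cont a b c u z H))).
        intros; apply cont_multR. apply cont_const. apply gs_shift_cont.
        intros x _. destruct (Gc_nonneg_bound a b c u (-x) Ha H). rewrite Rabs_right by lra.
        replace (x - - (c * u / a)) with (- (- x - c * u / a)) by ring.
        replace (gs al (- (- x - c * u / a))) with (gs al (- x - c * u / a)) by (unfold gs; f_equal; ring). auto. }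
      rewrite RInt_scalR by apply gs_shift_cont.
      apply Rle_trans with (K * / (al * (M - p))); auto.
      apply Rmult_le_compat_l; [lra|].
      assert (Hq' : Rabs (- (c * u / a)) = p) by (rewrite Rabs_Ropp; auto).
      rewrite <- Hq'. apply gauss_tail; auto. rewrite Hq'; lra.
Qed.

Lemma gs_even al x : gs al (- x) = gs al x.
Proof. unfold gs. f_equal. ring. Qed.

Lemma hh_even a b c u : hh a b c (- u) = hh a b c u.
Proof. unfold hh. rewrite gs_even, Rabs_Ropp. reflexivity. Qed.

Lemma Ev_derive al w : ex_derive (fun w => RInt (gs al) (- w) w) w.
Proof.
  unfold gs. auto_derive. repeat split.
  - apply cont_ex_RInt. apply gs_cont.
  - apply filter_forall. intros x. apply continuity_pt_filterlim. apply gs_cont.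
  - apply filter_forall. intros x. apply continuity_pt_filterlim. apply gs_cont.
Qed.

Lemma hh_cont a b c u : continuous (hh a b c) u.
Proof.
  unfold hh. apply cont_multR.
  - apply exd_cont. unfold gs. auto_derive. auto.
  - apply (cont_compR Rabs (fun w => RInt (gs (a / (2 * (a * b - c * c)))) (- (Rabs c * w / a)) (Rabs c * w / a))).
    apply continuous_Rabs. apply exd_cont.
    apply (ex_derive_comp (fun w => RInt (gs (a / (2 * (a * b - c * c)))) (- w) w) (fun w => Rabs c * w / a)).
    apply Ev_derive. auto_derive. auto.
Qed.

Lemma RInt_gs_sym al p : RInt (gs al) (- p) p = 2 * RInt (gs al) 0 p.
Proof.
  rewrite RInt_sym by apply gs_cont.
  rewrite (RInt_ext _ (fun x => 2 * gs al x)).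
  apply RInt_scalR. apply gs_cont.
  intros x _. rewrite gs_even. change (gs al x + gs al x = 2 * gs al x). ring.
Qed.

Lemma RInt_gs_le al a b : 0 <= al -> a <= b -> RInt (gs al) a b <= b - a.
Proof.
  intros Hal H. replace (b - a) with ((b - a) * 1) by ring. rewrite <- RInt_constR.
  apply RInt_leR; auto. apply gs_cont. apply cont_const. intros; apply gs_le1; auto.
Qed.

Lemma Mchoice C eps : 0 < C -> 0 < eps -> C * / ((C / eps + 1) * (C / eps + 1)) <= eps.
Proof.
  intros HC He. set (M := C / eps + 1).
  assert (HM1 : 1 <= M) by (unfold M; assert (0 < C/eps) by (apply Rdiv_lt_0_compat; lra); lra).
  assert (HMC : C <= eps * M) by (unfold M; replace (eps * (C / eps + 1)) with (C + eps) by (field; lra); lra).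
  apply (Rmult_le_reg_r (M * M)). nra. rewrite Rmult_assoc, Rinv_l by nra. nra.
Qed.

Lemma RInt_ugs A M Y : 0 < A -> RInt (fun u => u * gs A u) M Y = (gs A M - gs A Y) / (2 * A).
Proof.
  intros HA.
  assert (E := @is_RInt_derive R_CompleteNormedModule (fun u => - gs A u / (2 * A)) (fun u => u * gs A u) M Y).
  assert (H1 : forall x, Rmin M Y <= x <= Rmax M Y -> is_derive (fun u => - gs A u / (2 * A)) x (x * gs A x)).
  { intros x _. unfold gs. auto_derive. lra. field. lra. }
  assert (H2 : forall x, Rmin M Y <= x <= Rmax M Y -> continuous (fun u => u * gs A u) x).
  { intros x _. apply exd_cont. unfold gs. auto_derive. auto. }
  rewrite (is_RInt_unique _ _ _ _ (E H1 H2)). unfold minus, plus, opp; simpl. field. lra.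
Qed.

Lemma gs_bound A M : 0 < A -> 0 < M -> gs A M <= / (A * (M * M)).
Proof. intros. unfold gs. apply exp_neg_le. apply Rmult_lt_0_compat; nra. Qed.

Definition g0 A al s := / (2 * (A + al * (s * s))).

Definition Tt a b c := 4 * Kc a b c * RInt (g0 (/ (2 * a)) (a / (2 * (a * b - c * c)))) 0 (Rabs c / a).

Lemma outer a b c : 0 < a -> c * c < a * b -> is_integral_R (hh a b c) (Tt a b c).
Proof.
  intros Ha H. apply impr. apply hh_cont.
  intros eps Heps.
  set (A := / (2 * a)). set (al := a / (2 * (a * b - c * c))). set (K := Kc a b c).
  set (lam := Rabs c / a).
  assert (HA : 0 < A) by (unfold A; apply Rinv_0_lt_compat; lra).
  assert (Hal : 0 < al) by (unfold al; apply Rdiv_lt_0_compat; lra).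
  assert (HK : 0 < K) by (apply Kc_pos; auto).
  assert (Hlam : 0 <= lam) by (unfold lam; apply Rmult_le_pos; [apply Rabs_pos| left; apply Rinv_0_lt_compat; lra]).
  set (C := 4 * K * lam * / (2 * A * A) + 1).
  assert (HC0 : 0 <= 4 * K * lam * / (2 * A * A)).
  { apply Rmult_le_pos. nra. left; apply Rinv_0_lt_compat. nra. }
  assert (HC : 0 < C) by (unfold C; lra).
  set (M := C / eps + 1).
  assert (HM1 : 1 <= M) by (unfold M; assert (0 < C/eps) by (apply Rdiv_lt_0_compat; lra); lra).
  assert (HMb := Mchoice C eps HC Heps). fold M in HMb.
  assert (HMM : 0 < / (M * M)) by (apply Rinv_0_lt_compat; nra).
  assert (HgM : gs A M <= / (A * (M * M))) by (apply gs_bound; lra).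
  assert (Hinv : / (A * (M * M)) = / A * / (M * M)) by (field; split; lra).
  exists M. split; [lra|]. split.
  - rewrite RInt_sym by apply hh_cont.
    rewrite (RInt_ext _ (fun u => 2 * hh a b c u)).
    2:{ intros x _. rewrite hh_even. change (hh a b c x + hh a b c x = 2 * hh a b c x). ring. }
    rewrite RInt_scalR by apply hh_cont.
    rewrite (RInt_ext _ (fun u => (2 * K) * Fo A al lam u)).
    2:{ intros x Hx. rewrite Rmin_left in Hx by lra. rewrite Rmax_right in Hx by lra.
        unfold hh, Fo. fold A al K. rewrite (Rabs_right x) by lra.
        replace (Rabs c * x / a) with (lam * x) by (unfold lam; field; lra).
        rewrite RInt_gs_sym. change (K * gs A x * (2 * RInt (gs al) 0 (lam * x)) = 2 * K * (gs A x * RInt (gs al) 0 (lam * x))). ring. }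
    rewrite RInt_scalR by apply Fo_cont.
    rewrite outer_core by lra.
    unfold Tt. fold A al K lam.
    assert (Hg0 : forall x, continuous (g0 A al) x).
    { intros x. apply exd_cont. unfold g0. auto_derive. nra. }
    assert (Hdm : forall x, continuous (dM A al M) x) by (intros; apply dM_cont; lra).
    replace (2 * (2 * K * RInt (dM A al M) 0 lam) - 4 * K * RInt (g0 A al) 0 lam)
      with (- (4 * K * (RInt (g0 A al) 0 lam - RInt (dM A al M) 0 lam))) by ring.
    rewrite <- RInt_minusR by auto.
    assert (P : forall s, 0 <= g0 A al s - dM A al M s <= / A * / (M * M) * / (2 * A)).
    { intros s. unfold g0, dM.
      assert (Q : 0 < A + al * (s * s)) by nra.
      set (e := exp (- ((A + al * (s * s)) * (M * M)))).
      assert (He : 0 < e) by apply exp_pos.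
      assert (He2 : e <= gs A M).
      { unfold e, gs. destruct (Req_dec (al * (s*s)) 0) as [Z|Z].
        rewrite Z, Rplus_0_r. lra. left. apply exp_increasing.
        assert (0 < al * (s * s) * (M * M)) by (apply Rmult_lt_0_compat; nra).
        assert (E : -((A + al*(s*s))*(M*M)) = -(A*(M*M)) - (al*(s*s))*(M*M)) by ring.
        rewrite E. lra. }
      replace (/ (2 * (A + al * (s * s))) - (1 - e) / (2 * (A + al * (s * s))))
        with (e * / (2 * (A + al * (s * s)))) by (field; lra).
      assert (0 < / (2 * (A + al * (s * s))) <= / (2 * A)).
      { split. apply Rinv_0_lt_compat; lra. apply Rinv_le_contravar; nra. }
      split. nra. apply Rmult_le_compat; try lra. }
    assert (I1 : 0 <= RInt (fun s => g0 A al s - dM A al M s) 0 lam).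
    { apply Rle_trans with (RInt (fun _ => 0) 0 lam). rewrite RInt_constR. right; ring.
      apply RInt_leR; auto. apply cont_const.
      intros x. apply (continuous_minus (g0 A al) (dM A al M)); auto. intros; apply P. }
    assert (I2 : RInt (fun s => g0 A al s - dM A al M s) 0 lam <= (lam - 0) * (/ A * / (M * M) * / (2 * A))).
    { rewrite <- RInt_constR. apply RInt_leR; auto.
      intros x. apply (continuous_minus (g0 A al) (dM A al M)); auto. apply cont_const. intros; apply P. }
    rewrite Rabs_Ropp, Rabs_right by nra.
    apply Rle_trans with (C * / (M * M)); auto.
    unfold C. replace (4 * K * lam * / (2 * A * A) + 1) with (4 * K * (lam * (/ A * / (2 * A))) + 1) by (field; lra).
    apply Rle_trans with (4 * K * (lam * (/ A * / (2 * A))) * / (M * M)); [|nra].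
    replace (4 * K * (lam * (/ A * / (2 * A))) * / (M * M)) with (4 * K * ((lam - 0) * (/ A * / (M * M) * / (2 * A)))) by ring.
    apply Rmult_le_compat_l; lra.
  - intros Y HY.
    assert (Tail : RInt (fun x => Rabs (hh a b c x)) M Y <= eps).
    { apply Rle_trans with (RInt (fun u => (2 * K * lam) * (u * gs A u)) M Y).
      { apply RInt_leR; auto. apply (cont_abs (hh a b c) (hh_cont a b c)).
        intros; apply cont_multR. apply cont_const. apply exd_cont; unfold gs; auto_derive; auto.
        intros x Hx.
        unfold hh. fold A al K. rewrite (Rabs_right x) by lra.
        replace (Rabs c * x / a) with (lam * x) by (unfold lam; field; lra).
        assert (R1 := RInt_gs_nonneg al (-(lam*x)) (lam*x) ltac:(nra)).
        assert (R2 := RInt_gs_le al (-(lam*x)) (lam*x) ltac:(lra) ltac:(nra)).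
        pose proof (gs_pos A x).
        rewrite Rabs_right by (apply Rle_ge; repeat apply Rmult_le_pos; lra).
        replace (2*K*lam*(x*gs A x)) with (K * gs A x * (lam*x - - (lam*x))) by ring.
        apply Rmult_le_compat_l; [nra | lra]. }
      rewrite RInt_scalR by (intros; apply exd_cont; unfold gs; auto_derive; auto).
      rewrite RInt_ugs by auto.
      pose proof (gs_pos A Y).
      assert (B1 : 2*K*lam*((gs A M - gs A Y)/(2*A)) <= 2*K*lam*(/A * /(M*M) * /(2*A))).
      { apply Rmult_le_compat_l. nra. unfold Rdiv. apply Rmult_le_compat_r.
        left; apply Rinv_0_lt_compat; lra. lra. }
      assert (B2 : 2*K*lam*(/A * /(M*M) * /(2*A)) = (2*K*lam * / (2*A*A)) * / (M*M)) by (field; split; lra).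
      assert (B3 : 2*K*lam * / (2*A*A) <= C) by (unfold C; lra).
      apply Rle_trans with (C * / (M * M)); auto. nra. }
    split; auto.
    rewrite RInt_opp_sub by (apply (cont_abs _ (hh_cont a b c))).
    rewrite (RInt_ext _ (fun x => Rabs (hh a b c x))) by (intros; rewrite hh_even; reflexivity).
    auto.
Qed.

Lemma atan_int A k lam : 0 < A -> 0 < k ->
  RInt (g0 A (A * (k * k))) 0 lam = atan (k * lam) / (2 * A * k).
Proof.
  intros HA Hk.
  assert (E := @is_RInt_derive R_CompleteNormedModule (fun s => atan (k * s) / (2 * A * k)) (g0 A (A * (k * k))) 0 lam).
  assert (H1 : forall x, Rmin 0 lam <= x <= Rmax 0 lam -> is_derive (fun s => atan (k * s) / (2 * A * k)) x (g0 A (A * (k * k)) x)).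
  { intros x _. unfold g0. auto_derive. split; lra.
    assert (0 < 1 + k * x * (k * x * 1)) by nra.
    field. repeat split; nra. }
  assert (H2 : forall x, Rmin 0 lam <= x <= Rmax 0 lam -> continuous (g0 A (A * (k * k))) x).
  { intros x _. apply exd_cont. unfold g0. auto_derive. assert (0 <= A * (k * k) * (x * x)) by (apply Rmult_le_pos; nra). lra. }
  rewrite (is_RInt_unique _ _ _ _ (E H1 H2)). unfold minus, plus, opp; simpl.
  rewrite Rmult_0_r, atan_0. field. lra.
Qed.

Lemma Tt_val a b c : 0 < a -> c * c < a * b ->
  Tt a b c = 2 / PI * atan (Rabs c / sqrt (a * b - c * c)).
Proof.
  intros Ha H. unfold Tt.
  set (d := a * b - c * c). assert (Hd : 0 < d) by (unfold d; lra).
  assert (Hs : 0 < sqrt d) by (apply sqrt_lt_R0; lra).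
  assert (Hss : sqrt d * sqrt d = d) by (apply sqrt_sqrt; lra).
  set (k := a / sqrt d).
  assert (Hk : 0 < k) by (unfold k; apply Rdiv_lt_0_compat; lra).
  replace (a / (2 * d)) with (/ (2 * a) * (k * k)).
  2:{ unfold k. replace (a / sqrt d * (a / sqrt d)) with (a * a / (sqrt d * sqrt d)) by (field; lra). rewrite Hss. field. split; lra. }
  rewrite atan_int; [| apply Rinv_0_lt_compat; lra | auto].
  replace (k * (Rabs c / a)) with (Rabs c / sqrt d) by (unfold k; field; split; lra).
  unfold Kc. fold d. unfold k. field. pose proof PI_RGT_0. split; lra.
Qed.

Lemma int_R_unique F I1 I2 : is_integral_R F I1 -> is_integral_R F I2 -> I1 = I2.
Proof.
  intros H1 H2. destruct (Req_dec I1 I2) as [E|E]; auto. exfalso.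
  set (eps := Rabs (I1 - I2) / 2).
  assert (He : 0 < eps) by (unfold eps; apply Rdiv_lt_0_compat; [apply Rabs_pos_lt; lra | lra]).
  destruct (H1 eps He) as [M1 HM1]. destruct (H2 eps He) as [M2 HM2].
  set (M := Rmax (Rmax M1 M2) 0).
  assert (A1 : M1 <= M) by (unfold M; eapply Rle_trans; [apply Rmax_l|apply Rmax_l]).
  assert (A2 : M2 <= M) by (unfold M; eapply Rle_trans; [apply Rmax_r|apply Rmax_l]).
  destruct (HM1 (-M) M ltac:(lra) ltac:(lra)) as [J1 [[p1 E1] B1]].
  destruct (HM2 (-M) M ltac:(lra) ltac:(lra)) as [J2 [[p2 E2] B2]].
  assert (J1 = J2) by (rewrite <- E1, <- E2; apply RiemannInt_P5). subst J2.
  assert (Rabs (I1 - I2) <= Rabs (J1 - I1) + Rabs (J1 - I2)).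
  { replace (I1 - I2) with (- (J1 - I1) + (J1 - I2)) by ring.
    eapply Rle_trans; [apply Rabs_triang|]. rewrite Rabs_Ropp. lra. }
  unfold eps in *. rewrite <- H in B2. lra.
Qed.

Lemma int_R2_unique g I1 I2 : is_integral_R2 g I1 -> is_integral_R2 g I2 -> I1 = I2.
Proof.
  intros [h1 [Hh1 H1]] [h2 [Hh2 H2]].
  assert (h1 = h2) by (apply functional_extensionality; intros u; eapply int_R_unique; eauto).
  subst. eapply int_R_unique; eauto.
Qed.

Lemma core a b c : 0 < a -> 0 < b -> c * c < a * b ->
  is_integral_R2 (fun u v => fd a b c u v * Bfun (fd a b c) (Rabs u) (Rabs v))
    (2 / PI * atan (Rabs c / sqrt (a * b - c * c))).
Proof.
  intros Ha Hb H. exists (hh a b c). split.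
  - intros u. replace (fun v => fd a b c u v * Bfun (fd a b c) (Rabs u) (Rabs v)) with (Gc a b c u).
    apply inner; auto. apply functional_extensionality. intros v. symmetry. apply Gfun_Gc; auto.
  - rewrite <- Tt_val by auto. apply outer; auto.
Qed.

Lemma s11_std la lb cx cp th : s11 (gamma_std la lb cx cp) th = la / 2.
Proof.
  unfold s11, bil. simpl. assert (H := sin2_cos2 th). unfold Rsqr in H.
  transitivity (la * (sin th * sin th + cos th * cos th) / 2). field. rewrite H. field.
Qed.

Lemma s22_std la lb cx cp ph : s22 (gamma_std la lb cx cp) ph = lb / 2.
Proof.
  unfold s22, bil. simpl. assert (H := sin2_cos2 ph). unfold Rsqr in H.
  transitivity (lb * (sin ph * sin ph + cos ph * cos ph) / 2). field. rewrite H. field.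
Qed.

Lemma s12_std la lb cx cp th ph : s12 (gamma_std la lb cx cp) th ph =
  (cx * (cos th * cos ph) - cp * (sin th * sin ph)) / 2.
Proof. unfold s12, bil. simpl. field. Qed.

Lemma cs_bound x1 x2 y1 y2 : x1 * x1 + x2 * x2 = 1 -> y1 * y1 + y2 * y2 = 1 ->
  Rabs (x1 * y1) + Rabs (x2 * y2) <= 1.
Proof.
  intros H1 H2. rewrite !Rabs_mult.
  assert (E1 : Rabs x1 * Rabs x1 = x1 * x1) by (rewrite <- Rabs_mult; apply Rabs_right; nra).
  assert (E2 : Rabs x2 * Rabs x2 = x2 * x2) by (rewrite <- Rabs_mult; apply Rabs_right; nra).
  assert (E3 : Rabs y1 * Rabs y1 = y1 * y1) by (rewrite <- Rabs_mult; apply Rabs_right; nra).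
  assert (E4 : Rabs y2 * Rabs y2 = y2 * y2) by (rewrite <- Rabs_mult; apply Rabs_right; nra).
  rewrite <- E1, <- E2 in H1. rewrite <- E3, <- E4 in H2.
  set (p := Rabs x1) in *. set (q := Rabs x2) in *. set (r := Rabs y1) in *. set (s := Rabs y2) in *.
  assert (Q : 0 <= (p - r) * (p - r) + (q - s) * (q - s)) by (pose proof (Rle_0_sqr (p-r)); pose proof (Rle_0_sqr (q-s)); unfold Rsqr in *; lra).
  assert (Ex : (p - r) * (p - r) + (q - s) * (q - s) = (p*p + q*q) + (r*r + s*s) - 2 * (p * r + q * s)) by ring.
  lra.
Qed.

Lemma c_bound cx cp th ph : Rabs cp <= cx ->
  Rabs (cx * (cos th * cos ph) - cp * (sin th * sin ph)) <= cx.
Proof.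
  intros H.
  assert (B := cs_bound (cos th) (sin th) (cos ph) (sin ph)).
  assert (T1 := sin2_cos2 th). assert (T2 := sin2_cos2 ph). unfold Rsqr in T1, T2.
  specialize (B ltac:(lra) ltac:(lra)).
  eapply Rle_trans. apply Rabs_triang. rewrite Rabs_Ropp, !Rabs_mult.
  rewrite !Rabs_mult in B.
  assert (Hcx : 0 <= cx) by (pose proof (Rabs_pos cp); lra).
  rewrite (Rabs_right cx) by lra.
  pose proof (Rabs_pos (cos th)); pose proof (Rabs_pos (cos ph));
  pose proof (Rabs_pos (sin th)); pose proof (Rabs_pos (sin ph)).
  assert (0 <= Rabs (sin th) * Rabs (sin ph)) by nra.
  assert (0 <= Rabs (cos th) * Rabs (cos ph)) by nra.
  nra.
Qed.

Lemma val_mono a b c c0 : 0 < a -> 0 < b -> Rabs c <= c0 -> c0 * c0 < a * b ->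
  2 / PI * atan (Rabs c / sqrt (a * b - c * c)) <= 2 / PI * atan (c0 / sqrt (a * b - c0 * c0)).
Proof.
  intros Ha Hb Hc H0.
  assert (Hc0 : 0 <= c0) by (pose proof (Rabs_pos c); lra).
  assert (Ecc : Rabs c * Rabs c = c * c) by (rewrite <- Rabs_mult; apply Rabs_right; nra).
  assert (Hcc : c * c <= c0 * c0) by (pose proof (Rabs_pos c); nra).
  assert (S0 : 0 < sqrt (a * b - c0 * c0)) by (apply sqrt_lt_R0; lra).
  assert (S1 : sqrt (a * b - c0 * c0) <= sqrt (a * b - c * c)) by (apply sqrt_le_1_alt; lra).
  assert (L : Rabs c / sqrt (a * b - c * c) <= c0 / sqrt (a * b - c0 * c0)).
  { unfold Rdiv. apply Rmult_le_compat; try lra. apply Rabs_pos.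
    left; apply Rinv_0_lt_compat; lra. apply Rinv_le_contravar; lra. }
  apply Rmult_le_compat_l. unfold Rdiv. apply Rmult_le_pos; [lra|left; apply Rinv_0_lt_compat; apply PI_RGT_0].
  destruct L as [L|L]. left; apply atan_increasing; auto. rewrite L; lra.
Qed.

Lemma Q_eq la lb cx cp th ph :
  Qintegrand (gamma_std la lb cx cp) th ph =
  (fun u v => fd (la/2) (lb/2) ((cx * (cos th * cos ph) - cp * (sin th * sin ph)) / 2) u v *
     Bfun (fd (la/2) (lb/2) ((cx * (cos th * cos ph) - cp * (sin th * sin ph)) / 2)) (Rabs u) (Rabs v)).
Proof.
  rewrite <- (s11_std la lb cx cp th).
  rewrite <- (s22_std la lb cx cp ph).
  rewrite <- (s12_std la lb cx cp th ph). reflexivity.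
Qed.

Lemma part1 la lb cx cp : 1 <= la -> 1 <= lb -> Rabs cp <= cx -> cx * cx < la * lb ->
     is_Q (gamma_std la lb cx cp) (2 / PI * atan (cx / sqrt (la * lb - cx * cx)))
     /\ is_integral_R2 (Qintegrand (gamma_std la lb cx cp) 0 0)
          (2 / PI * atan (cx / sqrt (la * lb - cx * cx))).
Proof.
  intros Hla Hlb Hc H.
  assert (Hcx : 0 <= cx) by (pose proof (Rabs_pos cp); lra).
  assert (T : 2 / PI * atan (cx / 2 / sqrt (la / 2 * (lb / 2) - cx / 2 * (cx / 2))) =
              2 / PI * atan (cx / sqrt (la * lb - cx * cx))).
  { replace (la / 2 * (lb / 2) - cx / 2 * (cx / 2)) with ((la * lb - cx * cx) / 4) by field.
    rewrite sqrt_div_alt by lra.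
    replace 4 with (2 * 2) by ring. rewrite sqrt_square by lra.
    f_equal. f_equal. field. apply Rgt_not_eq. apply sqrt_lt_R0; lra. }
  assert (Z : is_integral_R2 (Qintegrand (gamma_std la lb cx cp) 0 0)
          (2 / PI * atan (cx / sqrt (la * lb - cx * cx)))).
  { rewrite Q_eq. rewrite cos_0, sin_0.
    replace ((cx * (1 * 1) - cp * (0 * 0)) / 2) with (cx / 2) by field.
    rewrite <- T. assert (V := core (la/2) (lb/2) (cx/2) ltac:(lra) ltac:(lra) ltac:(lra)). rewrite (Rabs_right (cx/2)) in V by lra.
    exact V. }
  split; auto. split.
  - intros I [th [ph HI]].
    rewrite Q_eq in HI.
    set (c := (cx * (cos th * cos ph) - cp * (sin th * sin ph)) / 2) in HI.
    assert (Hcb : Rabs c <= cx / 2).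
    { unfold c. unfold Rdiv. rewrite Rabs_mult, (Rabs_right (/2)) by lra.
      assert (B := c_bound cx cp th ph Hc). lra. }
    assert (Hcc : c * c < la / 2 * (lb / 2)).
    { assert (Ecc : Rabs c * Rabs c = c * c) by (rewrite <- Rabs_mult; apply Rabs_right; nra).
      pose proof (Rabs_pos c). nra. }
    assert (V := core (la/2) (lb/2) c ltac:(lra) ltac:(lra) Hcc).
    rewrite (int_R2_unique _ _ _ HI V). rewrite <- T.
    apply val_mono; try lra.
  - intros b Hb. apply Hb. exists 0, 0. auto.
Qed.

Theorem mainTheorem4 :
  (forall la lb cx cp : R,
     1 <= la -> 1 <= lb -> Rabs cp <= cx -> cx * cx < la * lb ->
     is_Q (gamma_std la lb cx cp) (2 / PI * atan (cx / sqrt (la * lb - cx * cx)))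
     /\ is_integral_R2 (Qintegrand (gamma_std la lb cx cp) 0 0)
          (2 / PI * atan (cx / sqrt (la * lb - cx * cx))))
  /\
  (forall r : R, 0 <= r ->
     is_Q (gamma_std (cosh (2 * r)) (cosh (2 * r)) (sinh (2 * r)) (sinh (2 * r)))
          (2 / PI * atan (sinh (2 * r)))).
Proof.
  split. exact part1.
  intros r Hr.
  set (x := 2 * r).
  assert (Hx : 0 <= x) by (unfold x; lra).
  assert (P : exp x * exp (- x) = 1) by (rewrite <- exp_plus; replace (x + - x) with 0 by ring; apply exp_0).
  assert (M : exp (- x) <= exp x).
  { destruct Hx as [Hx|Hx]. left; apply exp_increasing; lra. rewrite <- Hx, Ropp_0; lra. }
  pose proof (exp_pos x); pose proof (exp_pos (-x)).
  assert (Hch : 1 <= cosh x) by (unfold cosh; nra).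
  assert (Hsh : 0 <= sinh x) by (unfold sinh; lra).
  assert (D : cosh x * cosh x - sinh x * sinh x = 1) by (unfold cosh, sinh; nra).
  destruct (part1 (cosh x) (cosh x) (sinh x) (sinh x) Hch Hch) as [Q _].
  rewrite Rabs_right; lra. lra.
  rewrite D, sqrt_1, Rdiv_1_r in Q. exact Q.
Qed.
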